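(* Let $a\in[0,\infty)$ and let $t:[0,1]\to[0,\infty]$ and $s:[0,\infty]\to[0,1]$ be continuous and increasing functions such that (1) $t(x)=\frac{a}{2}$ if and only if $x=0$, and (2) the function $G_{t,s}:[0,1]^2\to[0,1]$, $G_{t,s}(x,y)=s(t(x)+t(y))$, is a grouping function. Then $s(x)=0$ if and only if $x\in[0,a]$.
   Context: ''Increasing'' means non-decreasing. Arithmetic in $[0,\infty]$ uses $c+\infty=\infty$; continuity on $[0,\infty]$ refers to the usual topology of the extended half-line. A grouping function is a map $G:[0,1]^2\to[0,1]$ that is (G1) commutative, (G2) $G(x,y)=0$ iff $x=y=0$, (G3) $G(x,y)=1$ iff $x=1$ or $y=1$, (G4) increasing in each variable, (G5) continuous. *)

(* Defs.v *)
From HB Require Import structures.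
From mathcomp Require Import all_boot all_order all_algebra.
From mathcomp Require Import all_classical all_reals.
From mathcomp Require Import topology normedtype ereal.
Unset Printing Implicit Defensive.
Import Order.TTheory GRing.Theory Num.Theory.
Import numFieldNormedType.Exports.
Local Open Scope classical_set_scope.
Local Open Scope ring_scope.

Definition unitI (R : realType) : set R := [set x : R | 0 <= x <= 1].

Definition extHalf (R : realType) : set (\bar R) := [set x : \bar R | (0 <= x)%E].

(* Grouping function G : [0,1]^2 -> [0,1], represented as a map R -> R -> R
   whose behaviour is only constrained on [0,1]^2. *)
Definition grouping_function (R : realType) (G : R -> R -> R) : Prop :=
  (forall x y, x \in unitI R -> y \in unitI R -> G x y \in unitI R) /\
  (forall x y, x \in unitI R -> y \in unitI R -> G x y = G y x) /\
  (* (G2) *)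
  (forall x y, x \in unitI R -> y \in unitI R -> (G x y = 0 <-> x = 0 /\ y = 0)) /\
  (forall x y, x \in unitI R -> y \in unitI R -> (G x y = 1 <-> x = 1 \/ y = 1)) /\
  (forall x x' y, x \in unitI R -> x' \in unitI R -> y \in unitI R ->
     x <= x' -> G x y <= G x' y) /\
  (forall x y y', x \in unitI R -> y \in unitI R -> y' \in unitI R ->
     y <= y' -> G x y <= G x y') /\
  {within unitI R `*` unitI R, continuous (fun p : R * R => G p.1 p.2)}.

(* Main.v *)
Require Import Defs.
From HB Require Import structures.
From mathcomp Require Import all_boot all_order all_algebra.
From mathcomp Require Import all_classical all_reals.
From mathcomp Require Import topology normedtype ereal.
Import Order.TTheory GRing.Theory Num.Theory.
Import numFieldNormedType.Exports.
Local Open Scope classical_set_scope.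
Local Open Scope ring_scope.

Theorem proposition6p2 (R : realType) (a : R) (t : R -> \bar R) (s : \bar R -> R) :
  0 <= a ->
  (forall x, x \in unitI R -> t x \in extHalf R) ->
  {within unitI R, continuous t} ->
  (forall x y, x \in unitI R -> y \in unitI R -> x <= y -> (t x <= t y)%E) ->
  (forall x, x \in extHalf R -> s x \in unitI R) ->
  {within extHalf R, continuous s} ->
  (forall x y, x \in extHalf R -> y \in extHalf R -> (x <= y)%E -> s x <= s y) ->
  (forall x, x \in unitI R -> (t x = (a / 2)%:E <-> x = 0)) ->
  grouping_function R (fun x y => s (t x + t y)%E) ->
  forall x, x \in extHalf R -> (s x = 0 <-> (0 <= x <= a%:E)%E).
Proof.
move=> a0 tI tc tmono sI sc smono t1 [_ [_ [G2 [G3 _]]]] x xI.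
have I0 : (0:R) \in unitI R by rewrite inE /unitI /= lexx ler01.
have I1 : (1:R) \in unitI R by rewrite inE /unitI /= lexx ler01.
have t0 : t 0 = (a/2)%:E by apply/t1.
have ta : (t 0%R + t 0%R = a%:E)%E by rewrite t0 -EFinD -splitr.
have sa : s a%:E = 0 by rewrite -ta; apply/G2.
have hI : forall z, z \in extHalf R -> 0 <= s z.
  by move=> z /sI; rewrite inE /unitI /= => /andP[].
have xge0 : (0 <= x)%E by move: xI; rewrite inE.
split; last first.
  move=> /andP[_ xa]; apply/eqP; rewrite eq_le hI // andbT -sa.
  apply: smono => //; rewrite inE /extHalf /=; by rewrite lee_fin.
move=> sx0; rewrite xge0 /=; rewrite leNgt; apply/negP => ax.
have [y [yI yn0 tyx]] : exists y, [/\ y \in unitI R, y <> 0 & (t y + t 0%R <= x)%E].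
  case: x xI xge0 sx0 ax => [r| |] //= xI xge0 sx0 ax; last first.
    by exists 1; split => //; [apply/eqP; exact: oner_neq0|exact: leey].
  have hn : nbhs (0%R : subspace (unitI R))
      (from_subspace (unitI R) t @^-1` [set u | (u < (r - a/2)%:E)%E]).
    apply: tc; rewrite /from_subspace /= t0.
    apply: open_ereal_lt'; rewrite lte_fin.
    rewrite lte_fin in ax; rewrite ltrBrDl -splitr //.
  have U0 : unitI R 0 by rewrite /unitI /= lexx ler01.
  have hw : within (unitI R) (nbhs 0%R)
      (from_subspace (unitI R) t @^-1` [set u | (u < (r - a/2)%:E)%E]).
    by rewrite (nbhs_subspace_in U0); exact: hn.
  move: hw => /nbhs_ballP [e /= e0 He].
  set y := Num.min (e/2) 1.
  have y0 : 0 < y by rewrite /y lt_min divr_gt0 ?ltr01.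
  have yI : y \in unitI R.
    by rewrite inE /unitI /= (ltW y0) /y ge_min lexx orbT.
  have := He y; rewrite /ball /= sub0r normrN gtr0_norm // => /(_ _).
  have ye : y < e by rewrite /y gt_min ltr_pdivrMr // ltr_pMr // ltr1n orTb.
  move=> /(_ ye); rewrite inE in yI => /(_ yI) /= ty.
  exists y; split; [by rewrite inE | by move=> y00; move: y0; rewrite y00 ltxx | ].
  rewrite t0; move: ty; rewrite /from_subspace; case: (t y) => [u| |] //=.
  by rewrite !lte_fin -EFinD lee_fin ltrBrDr => /ltW.
  by rewrite leNye.
have := G2 y 0 yI I0; move=> [h _].
have : s (t y + t 0%R)%E <> 0 by move=> /h [].
have tyI : (t y + t 0%R)%E \in extHalf R.
  rewrite inE /extHalf /=; apply: adde_ge0; [move: (tI y yI)|move: (tI 0 I0)]; by rewrite inE.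
have := smono _ _ tyI xI tyx; rewrite sx0 => le0; apply.
by apply/eqP; rewrite eq_le le0 hI.
Qed.
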